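(* There is a one-to-one correspondence between skeletal $2$-term homotopy Nijenhuis algebras and triples consisting of a Nijenhuis algebra $((A,\cdot),N)$, a Nijenhuis bimodule $((M,\triangleright,\triangleleft),N_M)$ over it, and a $3$-cocycle $(\chi,F)\in Z^3_{\mathrm{NAlg}}((A,N);(M,N_M))$. Explicitly, a skeletal $2$-term homotopy Nijenhuis algebra $((\mathcal{A}_1\xrightarrow{0}\mathcal{A}_0,\mu_2,\mu_3),(\mathcal{N}_0,\mathcal{N}_1,\mathcal{N}_2))$ corresponds to $A=\mathcal{A}_0$ with $a\cdot b=\mu_2(a,b)$, $N=\mathcal{N}_0$, $M=\mathcal{A}_1$ with $a\triangleright u=\mu_2(a,u)$, $u\triangleleft a=\mu_2(u,a)$, $N_M=\mathcal{N}_1$, and $(\chi,F)=(\mu_3,\mathcal{N}_2)$.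
   Context: Over a field of characteristic $0$. A 2-term $A_\infty$-algebra $(\mathcal{A}_1\xrightarrow{\partial}\mathcal{A}_0,\mu_2,\mu_3)$: linear $\partial$, bilinear $\mu_2:\mathcal{A}_i\times\mathcal{A}_j\to\mathcal{A}_{i+j}$ ($0\le i,j,i+j\le1$), trilinear $\mu_3:\mathcal{A}_0^{\times3}\to\mathcal{A}_1$, with, for $a,b,c,d\in\mathcal{A}_0$, $u,v\in\mathcal{A}_1$: $\partial\mu_2(a,u)=\mu_2(a,\partial u)$; $\partial\mu_2(u,a)=\mu_2(\partial u,a)$; $\mu_2(\partial u,v)=\mu_2(u,\partial v)$; $\partial\mu_3(a,b,c)=\mu_2(\mu_2(a,b),c)-\mu_2(a,\mu_2(b,c))$; $\mu_3(a,b,\partial u)=\mu_2(\mu_2(a,b),u)-\mu_2(a,\mu_2(b,u))$; $\mu_3(a,\partial u,b)=\mu_2(\mu_2(a,u),b)-\mu_2(a,\mu_2(u,b))$; $\mu_3(\partial u,a,b)=\mu_2(\mu_2(u,a),b)-\mu_2(u,\mu_2(a,b))$; $\mu_2(a,\mu_3(b,c,d))-\mu_3(\mu_2(a,b),c,d)+\mu_3(a,\mu_2(b,c),d)-\mu_3(a,b,\mu_2(c,d))+\mu_2(\mu_3(a,b,c),d)=0$. Write $ab=\mu_2(a,b)$ etc. A homotopy Nijenhuis operator is $(\mathcal{N}_0:\mathcal{A}_0\to\mathcal{A}_0,\mathcal{N}_1:\mathcal{A}_1\to\mathcal{A}_1,\mathcal{N}_2:\mathcal{A}_0\times\mathcal{A}_0\to\mathcal{A}_1)$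 with: $\partial\mathcal{N}_1=\mathcal{N}_0\partial$; $\mathcal{N}_0(\mathcal{N}_0(a)b+a\mathcal{N}_0(b)-\mathcal{N}_0(ab))-\mathcal{N}_0(a)\mathcal{N}_0(b)=\partial\mathcal{N}_2(a,b)$; $\mathcal{N}_1(\mathcal{N}_0(a)u+a\mathcal{N}_1(u)-\mathcal{N}_1(au))-\mathcal{N}_0(a)\mathcal{N}_1(u)=\mathcal{N}_2(a,\partial u)$; $\mathcal{N}_1(\mathcal{N}_1(u)a+u\mathcal{N}_0(a)-\mathcal{N}_1(ua))-\mathcal{N}_1(u)\mathcal{N}_0(a)=\mathcal{N}_2(\partial u,a)$; and, writing $a\cdot_{\mathcal{N}}b=\mathcal{N}_0(a)b+a\mathcal{N}_0(b)-\mathcal{N}_0(ab)$: $\mathcal{N}_0(a)\mathcal{N}_2(b,c)-\mathcal{N}_2(a,b)\mathcal{N}_0(c)-\mathcal{N}_2(a\cdot_{\mathcal{N}}b,c)+\mathcal{N}_2(a,b\cdot_{\mathcal{N}}c)-\mathcal{N}_1\big(a\mathcal{N}_2(b,c)-\mathcal{N}_2(ab,c)+\mathcal{N}_2(a,bc)-\mathcal{N}_2(a,b)c\big)=\mu_3(\mathcal{N}_0a,\mathcal{N}_0b,\mathcal{N}_0c)-\mathcal{N}_1\mu_3(\mathcal{N}_0a,\mathcal{N}_0b,c)-\mathcal{N}_1\mu_3(\mathcal{N}_0a,b,\mathcal{N}_0c)-\mathcal{N}_1\mu_3(a,\mathcal{N}_0b,\mathcal{N}_0c)+\mathcal{N}_1^2\mu_3(\mathcal{N}_0a,b,c)+\mathcal{N}_1^2\mu_3(a,\mathcal{N}_0b,c)+\mathcal{N}_1^2\mu_3(a,b,\mathcal{N}_0c)-\mathcal{N}_1^3\mu_3(a,b,c)$.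 A 2-term homotopy Nijenhuis algebra is such a pair; skeletal means $\partial=0$. Nijenhuis algebra: associative $(A,\cdot)$ with linear $N$, $N(a)N(b)=N(N(a)b+aN(b)-N(ab))$. Nijenhuis bimodule: $A$-bimodule with $N_M$ satisfying $N(a)\triangleright N_M(u)=N_M(N(a)\triangleright u+a\triangleright N_M(u)-N_M(a\triangleright u))$, $N_M(u)\triangleleft N(a)=N_M(N_M(u)\triangleleft a+u\triangleleft N(a)-N_M(u\triangleleft a))$. $C^3_{\mathrm{NAlg}}=\mathrm{Hom}(A^{\otimes3},M)\oplus\mathrm{Hom}(A^{\otimes2},M)$ and $(\chi,F)$ is a 3-cocycle iff $\delta_{\mathrm{Hoch}}\chi=0$ and $d_{N,N_M}F-\partial^{N,N_M}\chi=0$, where $(\delta_{\mathrm{Hoch}}f)(a_1,\dots,a_{n+1})=a_1\triangleright f(a_2,\dots)+\sum_{i=1}^n(-1)^if(\dots,a_ia_{i+1},\dots)+(-1)^{n+1}f(a_1,\dots,a_n)\triangleleft a_{n+1}$; $(d_{N,N_M}F)(a_1,\dots,a_{n+1})=N(a_1)\triangleright F(a_2,\dots,a_{n+1})-(-1)^nF(a_1,\dots,a_n)\triangleleft N(a_{n+1})+\sum_{i=1}^n(-1)^iF(a_1,\dots,a_{i-1},N(a_i)a_{i+1}+a_iN(a_{i+1})-N(a_ia_{i+1}),\dots,a_{n+1})-N_M((\delta_{\mathrm{Hoch}}F)(a_1,\dots,a_{n+1}))$; $\partial^{N,N_M}(f)(a_1,\dots,a_n)=\sum_{S\subseteq\{1..n\}}(-1)^{|S|}N_M^{|S|}(f(b_1,\dots,b_n))$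 with $b_i=a_i$ for $i\in S$, $b_i=N(a_i)$ otherwise. *)

(* Defs.v *)
From HB Require Import structures.
From mathcomp Require Import all_boot all_order all_algebra.
Set Implicit Arguments. Unset Strict Implicit. Unset Printing Implicit Defensive.
Import GRing.Theory.
Local Open Scope ring_scope.

Section Defs.
Variable K : fieldType.

Section TwoTerm.
Variables (A0 A1 : lmodType K).
Variables (d : A1 -> A0) (m00 : A0 -> A0 -> A0) (m01 : A0 -> A1 -> A1)
          (m10 : A1 -> A0 -> A1) (m3 : A0 -> A0 -> A0 -> A1).

Definition two_term_Ainf : Prop :=
  ( (forall a u, d (m01 a u) = m00 a (d u)) /\
      (forall u a, d (m10 u a) = m00 (d u) a) /\
      (forall u v, m10 u (d v) = m01 (d u) v) /\
      (forall a b c, d (m3 a b c) = m00 (m00 a b) c - m00 a (m00 b c)) /\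
      (forall a b u, m3 a b (d u) = m01 (m00 a b) u - m01 a (m01 b u)) /\
      (forall a b u, m3 a (d u) b = m10 (m01 a u) b - m01 a (m10 u b)) /\
      (forall a b u, m3 (d u) a b = m10 (m10 u a) b - m10 u (m00 a b)) /\
      (forall a b c e, m01 a (m3 b c e) - m3 (m00 a b) c e + m3 a (m00 b c) e
                       - m3 a b (m00 c e) + m10 (m3 a b c) e = 0)).

Variables (N0 : A0 -> A0) (N1 : A1 -> A1) (N2 : A0 -> A0 -> A1).

Definition Ndot (a b : A0) := m00 (N0 a) b + m00 a (N0 b) - N0 (m00 a b).

Definition homotopy_nijenhuis : Prop :=
  [/\ (forall u, d (N1 u) = N0 (d u)),
      (forall a b, N0 (Ndot a b) - m00 (N0 a) (N0 b) = d (N2 a b)),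
      (forall a u, N1 (m01 (N0 a) u + m01 a (N1 u) - N1 (m01 a u))
                   - m01 (N0 a) (N1 u) = N2 a (d u)),
      (forall a u, N1 (m10 (N1 u) a + m10 u (N0 a) - N1 (m10 u a))
                   - m10 (N1 u) (N0 a) = N2 (d u) a) &
      (forall a b c,
         m01 (N0 a) (N2 b c) - m10 (N2 a b) (N0 c) - N2 (Ndot a b) c
         + N2 a (Ndot b c)
         - N1 (m01 a (N2 b c) - N2 (m00 a b) c + N2 a (m00 b c) - m10 (N2 a b) c)
       = m3 (N0 a) (N0 b) (N0 c) - N1 (m3 (N0 a) (N0 b) c)
         - N1 (m3 (N0 a) b (N0 c)) - N1 (m3 a (N0 b) (N0 c))
         + N1 (N1 (m3 (N0 a) b c)) + N1 (N1 (m3 a (N0 b) c))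
         + N1 (N1 (m3 a b (N0 c))) - N1 (N1 (N1 (m3 a b c))))].
End TwoTerm.

Section NAlg.
Variables (A M : lmodType K).
Variables (mul : A -> A -> A) (N : A -> A).
Variables (l : A -> M -> M) (r : M -> A -> M) (NM : M -> M).

Definition nijenhuis_algebra : Prop :=
  (forall a b c, mul (mul a b) c = mul a (mul b c)) /\
  (forall a b, mul (N a) (N b) = N (mul (N a) b + mul a (N b) - N (mul a b))).

Definition bimodule : Prop :=
  [/\ (forall a b u, l (mul a b) u = l a (l b u)),
      (forall a b u, r u (mul a b) = r (r u a) b) &
      (forall a b u, r (l a u) b = l a (r u b))].

Definition nijenhuis_bimodule : Prop :=
  [/\ bimodule,
      (forall a u, l (N a) (NM u) = NM (l (N a) u + l a (NM u) - NM (l a u))) &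
      (forall a u, r (NM u) (N a) = NM (r (NM u) a + r u (N a) - NM (r u a)))].

Definition ndot (a b : A) := mul (N a) b + mul a (N b) - N (mul a b).

Definition hoch2 (F : A -> A -> M) (a1 a2 a3 : A) : M :=
  l a1 (F a2 a3) + (-1) ^+ 1 *: F (mul a1 a2) a3 + (-1) ^+ 2 *: F a1 (mul a2 a3)
  + (-1) ^+ 3 *: r (F a1 a2) a3.

Definition hoch3 (chi : A -> A -> A -> M) (a1 a2 a3 a4 : A) : M :=
  l a1 (chi a2 a3 a4) + (-1) ^+ 1 *: chi (mul a1 a2) a3 a4
  + (-1) ^+ 2 *: chi a1 (mul a2 a3) a4 + (-1) ^+ 3 *: chi a1 a2 (mul a3 a4)
  + (-1) ^+ 4 *: r (chi a1 a2 a3) a4.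

Definition dNN2 (F : A -> A -> M) (a1 a2 a3 : A) : M :=
  l (N a1) (F a2 a3) - (-1) ^+ 2 *: r (F a1 a2) (N a3)
  + (-1) ^+ 1 *: F (ndot a1 a2) a3 + (-1) ^+ 2 *: F a1 (ndot a2 a3)
  - NM (hoch2 F a1 a2 a3).

Definition partialNN3 (chi : A -> A -> A -> M) (a1 a2 a3 : A) : M :=
  let v (i : 'I_3) := nth a1 [:: a1; a2; a3] i in
  let b (S : {set 'I_3}) (i : 'I_3) := if i \in S then v i else N (v i) in
  \sum_(S : {set 'I_3})
     (-1) ^+ #|S| *: iter #|S| NM (chi (b S ord0) (b S (inord 1)) (b S (inord 2))).

Definition cocycle3 (chi : A -> A -> A -> M) (F : A -> A -> M) : Prop :=
  (forall a1 a2 a3 a4, hoch3 chi a1 a2 a3 a4 = 0) /\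
  (forall a1 a2 a3, dNN2 F a1 a2 a3 - partialNN3 chi a1 a2 a3 = 0).
End NAlg.
End Defs.

(* Main.v *)
Require Import Defs.
From HB Require Import structures.
From mathcomp Require Import all_boot all_order all_algebra.
Import GRing.Theory.
Local Open Scope ring_scope.

Lemma lin0 (K : fieldType) (U V : lmodType K) (f : U -> V) : linear f -> f 0 = 0.
Proof.
move=> Hf; have := Hf 1 0 0; rewrite scale1r addr0 scale1r => h.
by apply: (@addrI _ (f 0)); rewrite addr0 -h.
Qed.

Arguments lin0 {K U V f}.

Lemma sgn1 (K : fieldType) (V : lmodType K) (x : V) : (-1) ^+ 1 *: x = - x.
Proof. by rewrite expr1 scaleN1r. Qed.
Lemma sgn2 (K : fieldType) (V : lmodType K) (x : V) : (-1) ^+ 2 *: x = x.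
Proof. by rewrite -signr_odd /= expr0 scale1r. Qed.
Lemma sgn3 (K : fieldType) (V : lmodType K) (x : V) : (-1) ^+ 3 *: x = - x.
Proof. by rewrite -signr_odd /= expr1 scaleN1r. Qed.
Lemma sgn4 (K : fieldType) (V : lmodType K) (x : V) : (-1) ^+ 4 *: x = x.
Proof. by rewrite -signr_odd /= expr0 scale1r. Qed.

Definition g3 (p : bool * bool * bool) : {set 'I_3} :=
  [set i : 'I_3 | nth false [:: p.1.1; p.1.2; p.2] i].

Lemma g3_bij : bijective g3.
Proof.
exists (fun S : {set 'I_3} => (ord0 \in S, inord 1 \in S, inord 2 \in S)).
  by move=> [[x y] z]; rewrite /g3 !inE /= !inordK.
move=> S; apply/setP => i; rewrite /g3 inE /=.
case: i => [[|[|[|n]]] Hi] //=.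
- by congr (_ \in S); apply: val_inj.
- by congr (_ \in S); apply: val_inj; rewrite /= inordK.
- by congr (_ \in S); apply: val_inj; rewrite /= inordK.
Qed.

Lemma card_g3 x y z : #|g3 (x, y, z)| = (x + y + z)%N.
Proof.
rewrite /g3 cardsE -sum1_card big_mkcond /= !big_ord_recl big_ord0 /=.
by case: x; case: y; case: z.
Qed.

Lemma sum_bool3 (V : nmodType) (F : bool * bool * bool -> V) :
  \sum_j F j = \sum_x \sum_y \sum_z F (x, y, z).
Proof.
rewrite (eq_bigr (fun j => F (j.1, j.2))); last by case.
rewrite -(pair_bigA _ (fun p z => F (p, z))) /=.
rewrite (eq_bigr (fun p : bool * bool => \sum_z F ((p.1, p.2), z))); last by case.
rewrite -(pair_bigA _ (fun x y => \sum_z F (x, y, z))) //.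
Qed.

Lemma partial_expand (K : fieldType) (A M : lmodType K) (N : A -> A) (NM : M -> M)
  (chi : A -> A -> A -> M) a b c :
  partialNN3 N NM chi a b c =
  chi (N a) (N b) (N c) - NM (chi (N a) (N b) c)
         - NM (chi (N a) b (N c)) - NM (chi a (N b) (N c))
         + NM (NM (chi (N a) b c)) + NM (NM (chi a (N b) c))
         + NM (NM (chi a b (N c))) - NM (NM (NM (chi a b c))).
Proof.
rewrite /partialNN3 (reindex g3); last by apply: onW_bij; exact: g3_bij.
rewrite sum_bool3 !big_bool /=.
rewrite !card_g3 /g3 !inE /= !inordK //=.
rewrite !sgn1 !sgn2 !sgn3 expr0 scale1r.
by rewrite !addrA [LHS](ACl (8*7*6*4*5*3*2*1)).
Qed.

Theorem theorem6p4 (K : fieldType) (hK : [pchar K] =i pred0)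
  (A0 A1 : lmodType K)
  (m00 : A0 -> A0 -> A0) (m01 : A0 -> A1 -> A1) (m10 : A1 -> A0 -> A1)
  (m3 : A0 -> A0 -> A0 -> A1)
  (N0 : A0 -> A0) (N1 : A1 -> A1) (N2 : A0 -> A0 -> A1)
  (* linearity of all structure maps in each argument *)
  (Hm00l : forall b, linear (m00^~ b)) (Hm00r : forall a, linear (m00 a))
  (Hm01l : forall u, linear (m01^~ u)) (Hm01r : forall a, linear (m01 a))
  (Hm10l : forall a, linear (m10^~ a)) (Hm10r : forall u, linear (m10 u))
  (Hm3_1 : forall b c, linear (fun a => m3 a b c))
  (Hm3_2 : forall a c, linear (fun b => m3 a b c))
  (Hm3_3 : forall a b, linear (m3 a b))
  (HN0 : linear N0) (HN1 : linear N1)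
  (HN2l : forall b, linear (N2^~ b)) (HN2r : forall a, linear (N2 a)) :
  (* skeletal (d = 0) 2-term homotopy Nijenhuis algebra *)
  (two_term_Ainf (fun _ : A1 => 0 : A0) m00 m01 m10 m3 /\
   homotopy_nijenhuis (fun _ : A1 => 0 : A0) m00 m01 m10 m3 N0 N1 N2)
  <->
  (* Nijenhuis algebra, Nijenhuis bimodule and 3-cocycle (mu3, N2) *)
  (nijenhuis_algebra m00 N0 /\
   nijenhuis_bimodule m00 N0 m01 m10 N1 /\
   cocycle3 m00 N0 m01 m10 N1 m3 N2).
Proof.
have z00r a : m00 a 0 = 0 := lin0 (Hm00r a).
have z00l a : m00 0 a = 0 := lin0 (Hm00l a).
have z01l u : m01 0 u = 0 := lin0 (Hm01l u).
have z10r u : m10 u 0 = 0 := lin0 (Hm10r u).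
have z3a a b : m3 a b 0 = 0 := lin0 (Hm3_3 a b).
have z3b a b : m3 a 0 b = 0 := lin0 (Hm3_2 a b).
have z3c a b : m3 0 a b = 0 := lin0 (Hm3_1 a b).
have zN2r a : N2 a 0 = 0 := lin0 (HN2r a).
have zN2l a : N2 0 a = 0 := lin0 (HN2l a).
have zN0 : N0 0 = 0 := lin0 HN0.
have Eh3 a1 a2 a3 a4 : hoch3 m00 m01 m10 m3 a1 a2 a3 a4 =
   m01 a1 (m3 a2 a3 a4) - m3 (m00 a1 a2) a3 a4 + m3 a1 (m00 a2 a3) a4
                       - m3 a1 a2 (m00 a3 a4) + m10 (m3 a1 a2 a3) a4.
  by rewrite /hoch3 !sgn1 !sgn2 !sgn3 ?sgn4.
have Ed a b c : dNN2 m00 N0 m01 m10 N1 N2 a b c =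
         m01 (N0 a) (N2 b c) - m10 (N2 a b) (N0 c) - N2 (Ndot m00 N0 a b) c
         + N2 a (Ndot m00 N0 b c)
         - N1 (m01 a (N2 b c) - N2 (m00 a b) c + N2 a (m00 b c) - m10 (N2 a b) c).
  by rewrite /dNN2 /hoch2 !sgn1 !sgn2 !sgn3 ?sgn4.
rewrite /two_term_Ainf /homotopy_nijenhuis /nijenhuis_algebra /nijenhuis_bimodule /bimodule /cocycle3.
split.
- move=> [[_ [_ [_ [A4 [A5 [A6 [A7 A8]]]]]]] [_ H2 H3 H4 H5]].
  split; [split|split; [split; [split|..]|split]].
  + by move=> a b c; apply/eqP; rewrite -subr_eq0 -A4.
  + by move=> a b; apply/eqP; rewrite eq_sym -subr_eq0 H2.
  + by move=> a b u; apply/eqP; rewrite -subr_eq0 -A5 z3a.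
  + by move=> a b u; apply/eqP; rewrite eq_sym -subr_eq0 -A7 z3c.
  + by move=> a b u; apply/eqP; rewrite -subr_eq0 -(A6 a b u) z3b.
  + by move=> a u; apply/eqP; rewrite eq_sym -subr_eq0 H3 zN2r.
  + by move=> a u; apply/eqP; rewrite eq_sym -subr_eq0 H4 zN2l.
  + by move=> a1 a2 a3 a4; rewrite Eh3 A8.
  + by move=> a b c; rewrite Ed partial_expand H5 subrr.
- move=> [[As Nj] [[[B1 B2 B3] NL NR] [C1 C2]]].
  split; first do ! split.
  + by move=> a u; rewrite z00r.
  + by move=> u a; rewrite z00l.
  + by move=> u v; rewrite z10r z01l.
  + by move=> a b c; rewrite As subrr.
  + by move=> a b u; rewrite z3a B1 subrr.
  + by move=> a b u; rewrite z3b B3 subrr.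
  + by move=> a b u; rewrite z3c B2 subrr.
  + by move=> a b c e; rewrite -Eh3 C1.
  split.
  + by move=> u; rewrite zN0.
  + by move=> a b; rewrite /Ndot -Nj subrr.
  + by move=> a u; rewrite zN2r -NL subrr.
  + by move=> a u; rewrite zN2l -NR subrr.
  + by move=> a b c; have := C2 a b c; rewrite Ed partial_expand => /eqP; rewrite subr_eq0 => /eqP.
Qed.
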